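(* Let $I$ be a set of players with $|I|\ge2$ and $S$ a set of states of nature with $|S|\ge2$. Then there is no weak-universal $\infty$-type space on $S$ for player set $I$, and there is no weak-universal $*$-type space on $S$ for player set $I$.
   Context: An $\infty$-field on a nonempty set $M$ is a field of subsets closed under arbitrary intersections. For an $\infty$-field $\Sigma$ on $M$, $\Delta^\infty(M,\Sigma)$ is the set of finitely additive probability measures on $(M,\Sigma)$, endowed with the $\infty$-field generated by the sets $\{\mu:\mu(E)\ge p\}$, $E\in\Sigma$, $p\in[0,1]$. An $\infty$-type space on $S$ for $I$ is $\langle M,\Sigma,(T_i)_{i\in I},\theta\rangle$ with $M$ nonempty, $\Sigma$ an $\infty$-field on $M$, each $T_i:M\to\Delta^\infty(M,\Sigma)$ measurable such that for all $m\in M$, $A\in\Sigma$: $\{m':T_i(m')=T_i(m)\}\subseteq A$ implies $T_i(m)(A)=1$; and $\theta:M\to S$ $\Sigma$–$\mathrm{Pow}(S)$-measurable. A $*$-type space on $S$ for $I$ is $\langle M,(T_i)_{i\in I},\theta\rangle$ with $M$ nonempty, each $T_i$ a function from $M$ to finitely additive probability measures on $(M,\mathrm{Pow}(M))$ with $T_i(m)(\{m':T_i(m')=T_i(m)\})=1$, and $\theta:M\to S$ any function. A type morphism from $\langle M',\Sigma',(T'_i),\theta'\rangle$ to $\langle M,\Sigma,(T_i),\theta\rangle$ (for $*$-type spaces take $\Sigma=\mathrm{Pow}(M)$) is a $\Sigma'$–$\Sigma$-measurable $f:M'\to M$ with $\theta'(m')=\theta(f(m'))$ and $T_i(f(m'))(E)=T'_i(m')(f^{-1}(E))$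 for all $m'$, $E\in\Sigma$, $i\in I$. An $\infty$-type space (resp. $*$-type space) is weak-universal if every $\infty$-type space (resp. $*$-type space) on $S$ for $I$ admits some type morphism into it. *)

(* Defs.v *)
From Stdlib Require Import Reals.
Open Scope R_scope.

Set Implicit Arguments.

Definition inf_field (M : Type) (Sig : (M -> Prop) -> Prop) : Prop :=
  Sig (fun _ => True) /\
  (forall A, Sig A -> Sig (fun m => ~ A m)) /\
  (forall A B, Sig A -> Sig B -> Sig (fun m => A m \/ B m)) /\
  (forall F : (M -> Prop) -> Prop, (forall A, F A -> Sig A) ->
     Sig (fun m => forall A, F A -> A m)).

Definition gen_inf_field (M : Type) (G : (M -> Prop) -> Prop) : (M -> Prop) -> Prop :=
  fun A => forall Sig, inf_field Sig -> (forall B, G B -> Sig B) -> Sig A.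

(** Finitely additive probability measure on (M, Sig).  It is represented as
    a function on all subsets, normalized to be 0 outside Sig, so that
    (Leibniz) equality of measures is equality on Sig. *)
Definition fapm (M : Type) (Sig : (M -> Prop) -> Prop) (mu : (M -> Prop) -> R) : Prop :=
  (forall A, Sig A -> 0 <= mu A) /\
  mu (fun _ => True) = 1 /\
  (forall A B, Sig A -> Sig B -> (forall m, A m -> B m -> False) ->
     mu (fun m => A m \/ B m) = mu A + mu B) /\
  (forall A, ~ Sig A -> mu A = 0).

Definition Delta (M : Type) (Sig : (M -> Prop) -> Prop) : Type :=
  { mu : (M -> Prop) -> R | fapm Sig mu }.

Definition meas_val (M : Type) (Sig : (M -> Prop) -> Prop) (mu : Delta Sig)
  (A : M -> Prop) : R := proj1_sig mu A.

Definition Delta_field (M : Type) (Sig : (M -> Prop) -> Prop) :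
  (Delta Sig -> Prop) -> Prop :=
  gen_inf_field (fun B : Delta Sig -> Prop =>
    exists E p, Sig E /\ 0 <= p <= 1 /\
      forall mu, B mu <-> meas_val mu E >= p).

Definition measurable_map (X Y : Type) (SX : (X -> Prop) -> Prop)
  (SY : (Y -> Prop) -> Prop) (f : X -> Y) : Prop :=
  forall B, SY B -> SX (fun x => B (f x)).

Record InfTS (S I : Type) := {
  its_M : Type;
  its_ne : inhabited its_M;
  its_Sig : (its_M -> Prop) -> Prop;
  its_field : inf_field its_Sig;
  its_T : I -> its_M -> Delta its_Sig;
  its_T_meas : forall i, measurable_map its_Sig (@Delta_field its_M its_Sig) (its_T i);
  its_intro : forall i m A, its_Sig A ->
    (forall m', its_T i m' = its_T i m -> A m') -> meas_val (its_T i m) A = 1;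
  its_theta : its_M -> S;
  its_theta_meas : measurable_map its_Sig (fun _ : S -> Prop => True) its_theta
}.

Definition inf_type_morphism (S I : Type) (V U : InfTS S I)
  (f : its_M V -> its_M U) : Prop :=
  measurable_map (its_Sig V) (its_Sig U) f /\
  (forall m', its_theta V m' = its_theta U (f m')) /\
  (forall m' E i, its_Sig U E ->
     meas_val (its_T U i (f m')) E = meas_val (its_T V i m') (fun x => E (f x))).

Definition inf_weak_universal (S I : Type) (U : InfTS S I) : Prop :=
  forall V : InfTS S I, exists f, inf_type_morphism V U f.

Definition powset (M : Type) : (M -> Prop) -> Prop := fun _ => True.

Record StarTS (S I : Type) := {
  sts_M : Type;
  sts_ne : inhabited sts_M;
  sts_T : I -> sts_M -> Delta (@powset sts_M);
  sts_intro : forall i m,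
    meas_val (sts_T i m) (fun m' => sts_T i m' = sts_T i m) = 1;
  sts_theta : sts_M -> S
}.

Definition star_type_morphism (S I : Type) (V U : StarTS S I)
  (f : sts_M V -> sts_M U) : Prop :=
  (forall m', sts_theta V m' = sts_theta U (f m')) /\
  (forall m' (E : sts_M U -> Prop) i,
     meas_val (sts_T U i (f m')) E = meas_val (sts_T V i m') (fun x => E (f x))).

Definition star_weak_universal (S I : Type) (U : StarTS S I) : Prop :=
  forall V : StarTS S I, exists f, star_type_morphism V U f.

(* Main.v *)
From Pilot Require Import Defs.
From Stdlib Require Import Reals Lra Lia List Classical ClassicalEpsilon FunctionalExtensionality PropExtensionality ProofIrrelevance.
From mathcomp Require boolp classical_sets filter.
Import Pilot.Defs.

Definition UFprops (T : Type) (F : (T -> Prop) -> Prop) : Prop :=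
  F (fun _ => True) /\ ~ F (fun _ => False) /\
  (forall A B : T -> Prop, (forall x, A x -> B x) -> F A -> F B) /\
  (forall A B : T -> Prop, F A -> F B -> F (fun x => A x /\ B x)) /\
  (forall A : T -> Prop, F A \/ F (fun x => ~ A x)).
Arguments UFprops {T}.

Module UFM.
Import mathcomp.boot.ssreflect mathcomp.boot.ssrfun mathcomp.boot.ssrbool.
Import mathcomp.classical.boolp mathcomp.classical.classical_sets.
Lemma uf_exists (T : Type) (B : (T -> Prop) -> Prop) :
  B (fun _ => True) ->
  (forall A C, B A -> B C -> B (fun x => A x /\ C x)) ->
  (forall A, B A -> exists x, A x) ->
  exists F, (forall A, B A -> F A) /\ UFprops F.
Proof.
move=> BT BI Bex.
pose F0 := fun A : T -> Prop => exists A', B A' /\ forall x, A' x -> A x.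
have FF : filter.Filter F0.
  split.
  - by exists (fun _ => True); split.
  - move=> A C [A' [BA' HA]] [C' [BC' HC]]; exists (fun x => A' x /\ C' x); split.
      exact: BI.
    by move=> x [? ?]; split; [apply: HA|apply: HC].
  - move=> P Q PQ [A' [BA' HA]]; exists A'; split => // x /HA; exact: PQ.
have PF : filter.ProperFilter F0.
  apply: (@filter.Build_ProperFilter_ex _ F0) => // P [A' [BA' HA]].
  by have [x Ax] := Bex _ BA'; exists x; apply: HA.
have [G [UG sub]] := filter.ultraFilterLemma PF.
exists G; split.
  by move=> A BA; apply: sub; exists A; split.
have GF : filter.ProperFilter G := @filter.ultra_proper _ _ UG.
split; first exact: (@filter.filterT _ G).
split.
  move=> G0; have H := (@filter.filter_not_empty _ G GF); apply: H.
  suff -> : (set0 : set T) = (fun _ => False) by [].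
  by rewrite funeqE => x; rewrite propeqE.
split; first by move=> A C AC GA; exact: (@filter.filterS _ G _ A C AC GA).
split; first by move=> A C GA GC; exact: (@filter.filterI _ G _ A C GA GC).
move=> A; exact: (filter.in_ultra_setVsetC A UG).
Qed.
End UFM.

Set Bullet Behavior "Strict Subproofs".

Lemma pred_ext {X : Type} (A B : X -> Prop) : (forall x, A x <-> B x) -> A = B.
Proof.
  intros H; apply functional_extensionality; intro x;
  apply propositional_extensionality; auto.
Qed.

Section FieldFacts.
Context {X : Type} (Sig : (X -> Prop) -> Prop) (HF : inf_field Sig).

Lemma f_true : Sig (fun _ => True).
Proof. apply HF. Qed.
Lemma f_compl A : Sig A -> Sig (fun m => ~ A m).
Proof. apply HF. Qed.
Lemma f_union A B : Sig A -> Sig B -> Sig (fun m => A m \/ B m).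
Proof. apply HF. Qed.
Lemma f_inter (F : (X -> Prop) -> Prop) :
  (forall A, F A -> Sig A) -> Sig (fun m => forall A, F A -> A m).
Proof. apply HF. Qed.
Lemma f_ext A B : Sig A -> (forall x, A x <-> B x) -> Sig B.
Proof. intros H E. rewrite <- (pred_ext A B E). exact H. Qed.
Lemma f_and A B : Sig A -> Sig B -> Sig (fun x => A x /\ B x).
Proof.
  intros HA HB.
  apply (f_ext _ _ (f_compl _ (f_union _ _ (f_compl _ HA) (f_compl _ HB)))).
  intro x; split.
  - intro H; split; apply NNPP; tauto.
  - tauto.
Qed.
End FieldFacts.

Lemma gen_field {X : Type} (G : (X -> Prop) -> Prop) : inf_field (gen_inf_field G).
Proof.
  unfold gen_inf_field. split; [|split; [|split]].
  - intros Sig HS _; apply HS.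
  - intros A HA Sig HS HG; apply HS; apply HA; auto.
  - intros A B HA HB Sig HS HG; apply HS; [apply HA|apply HB]; auto.
  - intros F HFam Sig HS HG; apply HS; intros A HA; apply HFam; auto.
Qed.

Lemma gen_incl {X : Type} (G : (X -> Prop) -> Prop) B : G B -> gen_inf_field G B.
Proof. intros HB Sig _ HG; auto. Qed.

Section Meas.
Context {X : Type} (Sig : (X -> Prop) -> Prop) (HF : inf_field Sig).

Lemma mv_nonneg (mu : Delta Sig) A : Sig A -> 0 <= meas_val mu A.
Proof. apply (proj2_sig mu). Qed.
Lemma mv_true (mu : Delta Sig) : meas_val mu (fun _ => True) = 1.
Proof. apply (proj2_sig mu). Qed.
Lemma mv_add (mu : Delta Sig) A B : Sig A -> Sig B -> (forall m, A m -> B m -> False) ->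
  meas_val mu (fun m => A m \/ B m) = meas_val mu A + meas_val mu B.
Proof. apply (proj2_sig mu). Qed.
Lemma mv_nonsig (mu : Delta Sig) A : ~ Sig A -> meas_val mu A = 0.
Proof. apply (proj2_sig mu). Qed.

Lemma mv_compl (mu : Delta Sig) A : Sig A ->
  meas_val mu A + meas_val mu (fun x => ~ A x) = 1.
Proof.
  intros HA. rewrite <- (mv_add mu A (fun x => ~ A x) HA (f_compl _ HF _ HA)).
  - rewrite <- (mv_true mu). f_equal. apply pred_ext. intro x. split; auto.
    intros _. apply classic.
  - auto.
Qed.

Lemma mv_ge0 (mu : Delta Sig) A : 0 <= meas_val mu A.
Proof.
  destruct (classic (Sig A)) as [H|H].
  - apply mv_nonneg; auto.
  - rewrite mv_nonsig; auto. lra.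
Qed.

Lemma mv_le1 (mu : Delta Sig) A : meas_val mu A <= 1.
Proof.
  destruct (classic (Sig A)) as [H|H].
  - pose proof (mv_compl mu A H). pose proof (mv_ge0 mu (fun x => ~ A x)). lra.
  - rewrite mv_nonsig; auto. lra.
Qed.

Lemma mv_mono (mu : Delta Sig) A B : Sig A -> Sig B -> (forall x, A x -> B x) ->
  meas_val mu A <= meas_val mu B.
Proof.
  intros HA HB AB.
  assert (E : B = (fun x => A x \/ (B x /\ ~ A x))).
  { apply pred_ext. intro x. split.
    - intro Hb. destruct (classic (A x)); auto.
    - intros [H|[H _]]; auto. }
  rewrite E. rewrite mv_add; auto.
  - pose proof (mv_ge0 mu (fun x => B x /\ ~ A x)). lra.
  - apply f_and; auto. apply f_compl; auto.
  - intros m H [_ H']. auto.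
Qed.

Lemma DF_eq E c : Sig E -> 0 <= c <= 1 ->
  Delta_field (fun nu : Delta Sig => meas_val nu E = c).
Proof.
  intros HE Hc.
  assert (H1 : Delta_field (fun nu : Delta Sig => meas_val nu E >= c)).
  { apply gen_incl. exists E, c. split; auto. split; auto. intro; tauto. }
  assert (H2 : Delta_field (fun nu : Delta Sig => meas_val nu (fun x => ~ E x) >= 1 - c)).
  { apply gen_incl. exists (fun x => ~ E x), (1 - c). split; [apply f_compl; auto|].
    split; [lra|]. intro; tauto. }
  apply (f_ext _ _ _ (f_and _ (gen_field _) _ _ H1 H2)).
  intro nu. pose proof (mv_compl nu E HE). split.
  - intros [h1 h2]. lra.
  - intros h. split; lra.
Qed.

Lemma DF_eqv E (nu0 : Delta Sig) :
  Delta_field (fun nu : Delta Sig => meas_val nu E = meas_val nu0 E).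
Proof.
  destruct (classic (Sig E)) as [HE|HE].
  - apply DF_eq; auto. split; [apply mv_ge0|apply mv_le1].
  - apply (f_ext _ _ _ (f_true _ (gen_field _))).
    intro nu. rewrite !mv_nonsig; auto. tauto.
Qed.

Lemma DF_pos E : Sig E -> Delta_field (fun nu : Delta Sig => meas_val nu E > 0).
Proof.
  intros HE.
  apply (f_ext _ _ _ (f_compl _ (gen_field _) _ (DF_eq E 0 HE ltac:(lra)))).
  intro nu. pose proof (mv_ge0 nu E) as G. split; intro H1.
  - destruct G as [G|G]; [lra|]. exfalso; apply H1; auto.
  - lra.
Qed.
End Meas.

Definition ind (A : Prop) : R := if excluded_middle_informative A then 1 else 0.

Lemma ind_true (A : Prop) : A -> ind A = 1.
Proof. unfold ind. destruct (excluded_middle_informative A); tauto. Qed.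
Lemma ind_false (A : Prop) : ~ A -> ind A = 0.
Proof. unfold ind. destruct (excluded_middle_informative A); tauto. Qed.
Lemma ind_ge0 (A : Prop) : 0 <= ind A.
Proof. unfold ind. destruct (excluded_middle_informative A); lra. Qed.
Lemma ind_one (A : Prop) : ind A = 1 <-> A.
Proof. unfold ind. destruct (excluded_middle_informative A); split; intros; auto; try lra; tauto. Qed.

Fixpoint cnt {X : Type} (A : X -> Prop) (l : list X) : R :=
  match l with nil => 0 | x :: l' => ind (A x) + cnt A l' end.

Lemma cnt_ge0 {X} (A : X -> Prop) l : 0 <= cnt A l.
Proof. induction l; simpl. lra. pose proof (ind_ge0 (A a)). lra. Qed.

Lemma cnt_all {X} (A : X -> Prop) l : (forall x, In x l -> A x) -> cnt A l = INR (length l).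
Proof.
  induction l; intros H; simpl. reflexivity.
  rewrite ind_true by (apply H; simpl; auto). rewrite IHl by (intros; apply H; simpl; auto).
  destruct (length l); simpl; lra.
Qed.

Lemma cnt_or {X} (A B : X -> Prop) l : (forall x, A x -> B x -> False) ->
  cnt (fun x => A x \/ B x) l = cnt A l + cnt B l.
Proof.
  intros D. induction l; simpl. lra. rewrite IHl.
  destruct (classic (A a)) as [Ha|Ha].
  - rewrite (ind_true (A a \/ B a)), (ind_true (A a)), (ind_false (B a)); auto. lra.
    intro. eauto.
  - destruct (classic (B a)) as [Hb|Hb].
    + rewrite (ind_true (A a \/ B a)), (ind_false (A a)), (ind_true (B a)); auto. lra.
    + rewrite (ind_false (A a \/ B a)), (ind_false (A a)), (ind_false (B a)); auto. lra. tauto.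
Qed.

Lemma cnt_pos {X} (A : X -> Prop) l : cnt A l > 0 <-> exists x, In x l /\ A x.
Proof.
  induction l; simpl.
  - split. lra. intros [x [[] _]].
  - pose proof (cnt_ge0 A l). destruct (classic (A a)) as [Ha|Ha].
    + rewrite ind_true by auto. split; intros; [eauto|lra].
    + rewrite ind_false by auto. split.
      * intros H1. destruct (proj1 IHl ltac:(lra)) as [x [Hx Ax]]. eauto.
      * intros [x [[<-|Hx] Ax]]; [tauto|]. assert (cnt A l > 0) by (apply IHl; eauto). lra.
Qed.

Section Core.
Variables (S I : Type) (i1 i2 : I) (hi : i1 <> i2) (s0 t0 : S) (hs : s0 <> t0).
Variables (M : Type) (u0 : M) (Sig : (M -> Prop) -> Prop) (HSig : inf_field Sig)
  (T : I -> M -> Delta Sig)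
  (Tmeas : forall i, measurable_map Sig (@Delta_field M Sig) (T i))
  (Tintro : forall i m A, Sig A -> (forall m', T i m' = T i m -> A m') -> meas_val (T i m) A = 1)
  (th : M -> S) (thmeas : measurable_map Sig (fun _ : S -> Prop => True) th).

Definition nel := (M * list M)%type.
Definition lst (L : nel) : list M := fst L :: snd L.
Definition W := (M + (M * nel) + ((M -> Prop) * nel))%type.
Definition Wu (u : M) : W := inl (inl u).
Definition We (u : M) (L : nel) : W := inl (inr (u, L)).
Definition Wd (P : M -> Prop) (L : nel) : W := inr (P, L).
Definition SigW (A : W -> Prop) : Prop := Sig (fun u => A (Wu u)).

Lemma SigW_field : inf_field SigW.
Proof.
  unfold SigW. split; [|split; [|split]].
  - exact (f_true Sig HSig).
  - intros A HA. exact (f_compl Sig HSig _ HA).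
  - intros A B HA HB. exact (f_union Sig HSig _ _ HA HB).
  - intros F HFam.
    refine (f_ext Sig _ _ (f_inter _ HSig (fun B => exists A, F A /\ B = (fun u => A (Wu u))) _) _).
    + intros B [A [HA ->]]. auto.
    + intro u. split.
      * intros H A HA. apply (H (fun u => A (Wu u))). eauto.
      * intros H B [A [HA ->]]. apply H; exact HA.
Qed.

Definition UFspec (P : M -> Prop) (F : (nel -> Prop) -> Prop) : Prop :=
  UFprops F /\ ((exists y, P y) ->
    (forall y, P y -> F (fun L => In y (lst L))) /\ F (fun L => forall z, In z (lst L) -> P z)).

Lemma UF_ex P : exists F, UFspec P F.
Proof.
  destruct (classic (exists y, P y)) as [[p0 Hp0]|HP].
  - pose (B := fun A : nel -> Prop => exists ys : list M, (forall y, In y ys -> P y) /\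
        forall L, ((forall y, In y ys -> In y (lst L)) /\ (forall z, In z (lst L) -> P z)) -> A L).
    destruct (UFM.uf_exists nel B) as [F [HBF HF]].
    + exists nil. split. intros y []. auto.
    + intros A C [ys [Hys HA]] [zs [Hzs HC]]. exists (ys ++ zs). split.
      * intros y Hy. apply in_app_or in Hy. destruct Hy; auto.
      * intros L [H1 H2]. split; [apply HA|apply HC]; split; auto;
        intros y Hy; apply H1; apply in_or_app; auto.
    + intros A [ys [Hys HA]]. exists (p0, ys). apply HA. split.
      * intros y Hy. unfold lst. simpl. auto.
      * unfold lst. simpl. intros z [<-|Hz]; auto.
    + exists F. split; auto. intros _. split.
      * intros y Hy. apply HBF. exists (y :: nil). split.
        -- intros z [<-|[]]; auto.
        -- intros L [H1 _]. apply H1. simpl; auto.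
      * apply HBF. exists nil. split. intros y []. intros L [_ H]; auto.
  - exists (fun A => A (u0, nil)). split.
    + unfold UFprops. split; auto. split; auto. split; auto. split; auto.
      intros A. destruct (classic (A (u0, nil))); auto.
    + intros H; contradiction.
Qed.

Definition UF (P : M -> Prop) : (nel -> Prop) -> Prop :=
  proj1_sig (constructive_indefinite_description _ (UF_ex P)).
Lemma UF_spec P : UFspec P (UF P).
Proof. unfold UF. apply proj2_sig. Qed.

Lemma uf_add (F : (nel -> Prop) -> Prop) (a b : nel -> Prop) : UFprops F ->
  (forall x, a x -> b x -> False) ->
  ind (F (fun x => a x \/ b x)) = ind (F a) + ind (F b).
Proof.
  intros [FT [FF [FS [FI FU]]]] D.
  destruct (classic (F a)) as [Ha|Ha]; destruct (classic (F b)) as [Hb|Hb].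
  - exfalso. apply FF. apply (FS _ _ (fun x H => D x (proj1 H) (proj2 H)) (FI _ _ Ha Hb)).
  - rewrite (ind_true (F a)), (ind_false (F b)), ind_true; auto; [lra|].
    apply (FS a); auto.
  - rewrite (ind_false (F a)), (ind_true (F b)), ind_true; auto; [lra|].
    apply (FS b); auto.
  - rewrite (ind_false (F a)), (ind_false (F b)), ind_false; auto; [lra|].
    intro Hab. destruct (FU a) as [|Hna]; [tauto|]. destruct (FU b) as [|Hnb]; [tauto|].
    apply FF. refine (FS _ _ _ (FI _ _ Hab (FI _ _ Hna Hnb))).
    intros x [[H|H] [H1 H2]]; auto.
Qed.

Definition lnR (L : nel) : R := INR (length (lst L)).
Lemma lnR_pos L : 0 < lnR L.
Proof. unfold lnR, lst. apply lt_0_INR. simpl. lia. Qed.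

Definition unifR (L : nel) (A : W -> Prop) : R :=
  if excluded_middle_informative (SigW A) then cnt (fun x => A (We x L)) (lst L) / lnR L else 0.
Definition ufR (P : M -> Prop) (A : W -> Prop) : R :=
  if excluded_middle_informative (SigW A) then ind (UF P (fun L => A (Wd P L))) else 0.
Definition pushR (mu : Delta Sig) (A : W -> Prop) : R := meas_val mu (fun u => A (Wu u)).

Lemma SigW_true : SigW (fun _ => True).
Proof. apply SigW_field. Qed.
Lemma SigW_union A B : SigW A -> SigW B -> SigW (fun m => A m \/ B m).
Proof. apply SigW_field. Qed.

Lemma unif_ok L : fapm SigW (unifR L).
Proof.
  pose proof (lnR_pos L) as Hl.
  unfold unifR. split; [|split; [|split]].
  - intros A HA. destruct (excluded_middle_informative (SigW A)); [|lra].
    unfold Rdiv. apply Rmult_le_pos; [apply cnt_ge0|left; apply Rinv_0_lt_compat; auto].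
  - destruct (excluded_middle_informative (SigW (fun _ => True))) as [_|n];
      [|exfalso; apply n; apply SigW_true].
    rewrite cnt_all by auto. unfold lnR. field. apply Rgt_not_eq. exact Hl.
  - intros A B HA HB D.
    destruct (excluded_middle_informative (SigW (fun m => A m \/ B m))) as [_|n];
      [|exfalso; apply n; apply SigW_union; auto].
    destruct (excluded_middle_informative (SigW A)); [|contradiction].
    destruct (excluded_middle_informative (SigW B)); [|contradiction].
    rewrite (cnt_or (fun x => A (We x L)) (fun x => B (We x L))) by eauto.
    unfold Rdiv. ring.
  - intros A HA. destruct (excluded_middle_informative (SigW A)); [contradiction|auto].
Qed.

Lemma uf_ok P : fapm SigW (ufR P).
Proof.
  destruct (UF_spec P) as [HU _].
  unfold ufR. split; [|split; [|split]].
  - intros A HA. destruct (excluded_middle_informative (SigW A)); [apply ind_ge0|lra].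
  - destruct (excluded_middle_informative (SigW (fun _ => True))) as [_|n];
      [|exfalso; apply n; apply SigW_true].
    apply ind_true. apply HU.
  - intros A B HA HB D.
    destruct (excluded_middle_informative (SigW (fun m => A m \/ B m))) as [_|n];
      [|exfalso; apply n; apply SigW_union; auto].
    destruct (excluded_middle_informative (SigW A)); [|contradiction].
    destruct (excluded_middle_informative (SigW B)); [|contradiction].
    apply (uf_add _ (fun L => A (Wd P L)) (fun L => B (Wd P L))); eauto.
  - intros A HA. destruct (excluded_middle_informative (SigW A)); [contradiction|auto].
Qed.

Lemma push_ok (mu : Delta Sig) : fapm SigW (pushR mu).
Proof.
  unfold pushR. split; [|split; [|split]].
  - intros A HA. apply mv_nonneg. exact HA.
  - apply mv_true.
  - intros A B HA HB D. apply (mv_add Sig mu (fun u => A (Wu u)) (fun u => B (Wu u))); eauto.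
  - intros A HA. apply mv_nonsig. exact HA.
Qed.

Definition Dunif (L : nel) : Delta SigW := exist _ (unifR L) (unif_ok L).
Definition Duf (P : M -> Prop) : Delta SigW := exist _ (ufR P) (uf_ok P).
Definition Dpush (mu : Delta Sig) : Delta SigW := exist _ (pushR mu) (push_ok mu).

Definition TW (i : I) (w : W) : Delta SigW :=
  match w with
  | inl (inl u) => Dpush (T i u)
  | inl (inr (u, L)) => if excluded_middle_informative (i = i2) then Dunif L else Dpush (T i u)
  | inr (P, L) => if excluded_middle_informative (i = i2) then Dunif L else Duf P
  end.

Definition thW (w : W) : S :=
  match w with
  | inl (inl u) => th u
  | inl (inr (u, _)) => th u
  | inr (P, _) => if excluded_middle_informative (exists y, P y) then s0 else t0
  end.

Lemma TW_Wu i u : TW i (Wu u) = Dpush (T i u).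
Proof. reflexivity. Qed.
Lemma TW_We2 u L : TW i2 (We u L) = Dunif L.
Proof. simpl. destruct (excluded_middle_informative (i2 = i2)); [reflexivity|congruence]. Qed.
Lemma TW_Wen i u L : i <> i2 -> TW i (We u L) = Dpush (T i u).
Proof. intros H. simpl. destruct (excluded_middle_informative (i = i2)); [congruence|reflexivity]. Qed.
Lemma TW_Wd2 P L : TW i2 (Wd P L) = Dunif L.
Proof. simpl. destruct (excluded_middle_informative (i2 = i2)); [reflexivity|congruence]. Qed.
Lemma TW_Wdn i P L : i <> i2 -> TW i (Wd P L) = Duf P.
Proof. intros H. simpl. destruct (excluded_middle_informative (i = i2)); [congruence|reflexivity]. Qed.

Lemma push_DF (B : Delta SigW -> Prop) : Delta_field B -> Delta_field (fun nu => B (Dpush nu)).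
Proof.
  intros HB Sg HS HG.
  apply (HB (fun B' => Sg (fun nu => B' (Dpush nu)))).
  - destruct HS as [h1 [h2 [h3 h4]]]. split; [|split; [|split]].
    + exact h1.
    + intros A HA. apply h2. exact HA.
    + intros A C HA HC. apply h3; auto.
    + intros F HFam.
      refine (f_ext Sg _ _ (h4 (fun X => exists A, F A /\ X = (fun nu => A (Dpush nu))) _) _).
      * intros X [A [HA ->]]. apply HFam; exact HA.
      * intro nu. split.
        -- intros H A HA. apply (H (fun nu => A (Dpush nu))). eauto.
        -- intros H X [A [HA ->]]. apply H; exact HA.
  - intros B' [E [p [HE [Hp HB']]]]. apply HG. exists (fun u => E (Wu u)), p.
    split; [exact HE|]. split; [exact Hp|]. intro mu. apply HB'.
Qed.

Lemma TW_meas i : measurable_map SigW (@Delta_field W SigW) (TW i).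
Proof.
  intros B HB. unfold SigW. simpl. apply (Tmeas i (fun nu => B (Dpush nu))).
  apply push_DF. exact HB.
Qed.

Lemma thW_meas : measurable_map SigW (fun _ : S -> Prop => True) thW.
Proof. intros B _. unfold SigW. simpl. apply thmeas. exact Logic.I. Qed.

Lemma intro_push i u A : SigW A -> (forall m', TW i m' = Dpush (T i u) -> A m') ->
  meas_val (Dpush (T i u)) A = 1.
Proof.
  intros HA H. apply (Tintro i u (fun v => A (Wu v)) HA).
  intros u' e. apply H. rewrite TW_Wu, e. reflexivity.
Qed.

Lemma intro_unif L A : SigW A -> (forall m', TW i2 m' = Dunif L -> A m') ->
  meas_val (Dunif L) A = 1.
Proof.
  intros HA H. simpl. unfold unifR.
  destruct (excluded_middle_informative (SigW A)); [|contradiction].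
  rewrite cnt_all.
  - unfold lnR. field. apply Rgt_not_eq. apply (lnR_pos L).
  - intros x _. apply H. apply TW_We2.
Qed.

Lemma TW_intro i m A : SigW A -> (forall m', TW i m' = TW i m -> A m') ->
  meas_val (TW i m) A = 1.
Proof.
  intros HA H. destruct m as [[u|[u L]]|[P L]].
  - apply intro_push; auto.
  - change (inl (inr (u, L)) : W) with (We u L) in *.
    destruct (excluded_middle_informative (i = i2)) as [->|n].
    + rewrite TW_We2 in *. apply intro_unif; auto.
    + rewrite (TW_Wen i u L n) in *. apply intro_push; auto.
  - change (inr (P, L) : W) with (Wd P L) in *.
    destruct (excluded_middle_informative (i = i2)) as [->|n].
    + rewrite TW_Wd2 in *. apply intro_unif; auto.
    + rewrite (TW_Wdn i P L n) in *. simpl. unfold ufR.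
      destruct (excluded_middle_informative (SigW A)); [|contradiction].
      apply ind_true. destruct (UF_spec P) as [[FT [_ [FS _]]] _].
      apply (FS (fun _ => True)); auto. intros L' _. apply H. apply TW_Wdn; auto.
Qed.

Definition closedR (R : W -> W -> Prop) (A : W -> Prop) := forall a b, R a b -> (A a <-> A b).
Definition bisim (R : W -> W -> Prop) := forall x y, R x y -> thW x = thW y /\
  forall i A, closedR R A -> meas_val (TW i x) A = meas_val (TW i y) A.
Definition eqv (x y : W) := exists R, bisim R /\ R x y.
Definition closedE (A : W -> Prop) := forall a b, eqv a b -> (A a <-> A b).

Lemma eqv_th x y : eqv x y -> thW x = thW y.
Proof. intros [R [HR Hxy]]. apply (HR x y Hxy). Qed.
Lemma eqv_T x y i A : eqv x y -> closedE A -> meas_val (TW i x) A = meas_val (TW i y) A.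
Proof.
  intros [R [HR Hxy]] HA. apply (HR x y Hxy). intros a b Hab. apply HA. exists R; auto.
Qed.

Definition agree (mu nu : Delta SigW) := forall A, closedE A -> meas_val mu A = meas_val nu A.
Lemma agree_sym mu nu : agree mu nu -> agree nu mu.
Proof. intros H A HA. symmetry. auto. Qed.
Lemma agree_trans a b c : agree a b -> agree b c -> agree a c.
Proof. intros H1 H2 A HA. rewrite H1, H2; auto. Qed.
Lemma eqv_agree x y : eqv x y -> agree (TW i1 x) (TW i1 y).
Proof. intros H A HA. apply eqv_T; auto. Qed.

Definition sim (y u : M) := th y = th u /\ agree (TW i1 (Wu y)) (TW i1 (Wu u)).
Lemma sim_refl y : sim y y.
Proof. split; auto. intros A _; auto. Qed.
Lemma sim_sym y u : sim y u -> sim u y.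
Proof. intros [H1 H2]. split; auto. apply agree_sym; auto. Qed.
Lemma sim_trans a b c : sim a b -> sim b c -> sim a c.
Proof. intros [H1 H2] [H3 H4]. split. congruence. eapply agree_trans; eauto. Qed.

Definition Cl (y : M) (m : W) := thW m = th y /\ agree (TW i1 m) (TW i1 (Wu y)).
Lemma Cl_closed y : closedE (Cl y).
Proof.
  intros a b Hab. pose proof (eqv_th a b Hab). pose proof (eqv_agree a b Hab).
  unfold Cl. split; intros [H1 H2]; split.
  - congruence.
  - eapply agree_trans; [apply agree_sym; eauto|]; auto.
  - congruence.
  - eapply agree_trans; eauto.
Qed.

Lemma Cl_meas y : SigW (Cl y).
Proof.
  unfold SigW, Cl.
  pose (nu0 := T i1 y).
  assert (HD : Delta_field (fun nu => agree (Dpush nu) (Dpush nu0))).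
  { refine (f_ext _ _ _ (f_inter _ (gen_field _)
      (fun X => exists A, closedE A /\ X = (fun nu : Delta Sig =>
          meas_val nu (fun u => A (Wu u)) = meas_val nu0 (fun u => A (Wu u)))) _) _).
    - intros X [A [HA ->]]. apply (DF_eqv Sig HSig).
    - intro nu. split.
      + intros H A HA. apply (H (fun nu : Delta Sig =>
          meas_val nu (fun u => A (Wu u)) = meas_val nu0 (fun u => A (Wu u)))). eauto.
      + intros H X [A [HA ->]]. apply H; exact HA. }
  exact (f_and Sig HSig _ _ (thmeas (fun s => s = th y) Logic.I) (Tmeas i1 _ HD)).
Qed.

Definition Bs (y : M) (m : W) := meas_val (TW i2 m) (Cl y) > 0.
Lemma Bs_closed y : closedE (Bs y).
Proof.
  intros a b Hab. unfold Bs. rewrite (eqv_T a b i2 (Cl y) Hab (Cl_closed y)). tauto.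
Qed.
Lemma Bs_meas y : SigW (Bs y).
Proof.
  unfold SigW, Bs. exact (Tmeas i2 _ (DF_pos Sig HSig _ (Cl_meas y))).
Qed.

Lemma Cl_We y x L : Cl y (We x L) <-> sim x y.
Proof.
  unfold Cl, sim. rewrite (TW_Wen i1 x L hi). simpl. tauto.
Qed.

Lemma Bs_Wd y P L : Bs y (Wd P L) <-> exists x, In x (lst L) /\ sim x y.
Proof.
  unfold Bs. rewrite TW_Wd2. simpl. unfold unifR.
  destruct (excluded_middle_informative (SigW (Cl y))) as [_|n];
    [|exfalso; apply n; apply Cl_meas].
  pose proof (lnR_pos L) as Hl. pose proof (cnt_ge0 (fun x => Cl y (We x L)) (lst L)) as Hc.
  split.
  - intros H. assert (Hp : cnt (fun x => Cl y (We x L)) (lst L) > 0).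
    { destruct Hc as [Hc|Hc]; auto. rewrite <- Hc in H. unfold Rdiv in H. lra. }
    apply cnt_pos in Hp. destruct Hp as [x [Hx Hcl]]. exists x. split; auto.
    apply (proj1 (Cl_We y x L)); auto.
  - intros [x [Hx Hs]]. assert (Hp : cnt (fun x => Cl y (We x L)) (lst L) > 0).
    { apply cnt_pos. exists x. split; auto. apply (proj2 (Cl_We y x L)); auto. }
    unfold Rdiv. apply Rmult_lt_0_compat; auto. apply Rinv_0_lt_compat; auto.
Qed.

Definition closedsim (P : M -> Prop) := forall y u, sim y u -> P y -> P u.

Lemma uf_Bs P y L : (exists z, P z) -> closedsim P ->
  (meas_val (TW i1 (Wd P L)) (Bs y) = 1 <-> P y).
Proof.
  intros Hne HP. rewrite (TW_Wdn i1 P L hi). simpl. unfold ufR.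
  destruct (excluded_middle_informative (SigW (Bs y))) as [_|n];
    [|exfalso; apply n; apply Bs_meas].
  rewrite ind_one.
  destruct (UF_spec P) as [[FT [FF [FS [FI FU]]]] Hsp]. destruct (Hsp Hne) as [Hy Hall].
  split.
  - intros H. apply NNPP. intros Hn. apply FF.
    refine (FS _ _ _ (FI _ _ H Hall)). intros L' [H1 H2].
    apply Bs_Wd in H1. destruct H1 as [x [Hx Hs]]. apply Hn. apply (HP x y Hs). auto.
  - intros Py. refine (FS _ _ _ (Hy y Py)). intros L' HL'. apply Bs_Wd.
    exists y. split; auto. apply sim_refl.
Qed.

Variable f : W -> M.
Hypothesis fth : forall w, thW w = th (f w).
Hypothesis fT : forall w E i, Sig E ->
  meas_val (T i (f w)) E = meas_val (TW i w) (fun x => E (f x)).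

Lemma univ_bisim : bisim (fun w w' => w' = Wu (f w)).
Proof.
  intros x y ->. split.
  - simpl. apply fth.
  - intros i A HA. rewrite TW_Wu. simpl. unfold pushR.
    destruct (classic (Sig (fun u => A (Wu u)))) as [HS|HS].
    + rewrite fT by exact HS. f_equal. apply pred_ext. intro w. exact (HA w _ eq_refl).
    + rewrite (mv_nonsig Sig _ _ HS). rewrite (mv_nonsig SigW _ A HS). reflexivity.
Qed.

Definition L0 : nel := (u0, nil).
Definition g (P : M -> Prop) : M := f (Wd P L0).

Lemma g_eqv P : eqv (Wd P L0) (Wu (g P)).
Proof. exists (fun w w' => w' = Wu (f w)). split; [apply univ_bisim|reflexivity]. Qed.

Lemma g_inj P Q : closedsim P -> closedsim Q -> sim (g P) (g Q) -> forall y, P y <-> Q y.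
Proof.
  intros cP cQ [Hth Hag] y.
  pose proof (eqv_th _ _ (g_eqv P)) as tP. pose proof (eqv_th _ _ (g_eqv Q)) as tQ.
  pose proof (eqv_agree _ _ (g_eqv P)) as aP. pose proof (eqv_agree _ _ (g_eqv Q)) as aQ.
  assert (Ht : thW (Wd P L0) = thW (Wd Q L0)).
  { rewrite tP, tQ. simpl. exact Hth. }
  assert (Ha : agree (TW i1 (Wd P L0)) (TW i1 (Wd Q L0))).
  { eapply agree_trans; [exact aP|]. eapply agree_trans; [exact Hag|]. apply agree_sym; exact aQ. }
  simpl in Ht.
  destruct (excluded_middle_informative (exists y, P y)) as [eP|eP];
  destruct (excluded_middle_informative (exists y, Q y)) as [eQ|eQ].
  - rewrite <- (uf_Bs P y L0 eP cP), <- (uf_Bs Q y L0 eQ cQ).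
    rewrite (Ha (Bs y) (Bs_closed y)). tauto.
  - exfalso; apply hs; exact Ht.
  - exfalso; apply hs; symmetry; exact Ht.
  - split; intro H; [exfalso; apply eP|exfalso; apply eQ]; eauto.
Qed.

Lemma core_false : False.
Proof.
  pose (D := fun u => exists P, closedsim P /\ sim (g P) u /\ ~ P u).
  assert (cD : closedsim D).
  { intros y u Hs [P [cP [HgP nP]]]. exists P. split; auto. split.
    - eapply sim_trans; eauto.
    - intro Pu. apply nP. apply (cP u y); auto. apply sim_sym; auto. }
  destruct (classic (D (g D))) as [H|H].
  - destruct H as [P [cP [Hs nP]]]. apply nP. apply (g_inj P D cP cD Hs). 
    exists P. split; auto.
  - apply H. exists D. split; auto. split; auto. apply sim_refl.
Qed.

End Core.

Lemma powset_field (X : Type) : inf_field (@powset X).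
Proof. unfold powset. split; [|split; [|split]]; intros; exact Logic.I. Qed.

Theorem theorem4 (S I : Type)
  (HI : exists i j : I, i <> j) (HS : exists s t : S, s <> t) :
  (~ exists U : InfTS S I, inf_weak_universal U) /\
  (~ exists U : StarTS S I, star_weak_universal U).
Proof.
  destruct HI as [i1 [i2 hi]]. destruct HS as [s0 [t0 hs]].
  split.
  - intros [U HU]. destruct (its_ne U) as [u0].
    pose (V := @Build_InfTS S I (W (its_M U)) (inhabits (Wu _ u0)) (SigW _ (its_Sig U))
      (SigW_field _ _ (its_field U)) (TW I i2 _ u0 _ (its_field U) (its_T U))
      (TW_meas I i2 _ u0 _ (its_field U) (its_T U) (its_T_meas U))
      (TW_intro I i2 _ u0 _ (its_field U) (its_T U) (its_intro U))
      (thW S s0 t0 _ (its_theta U)) (thW_meas S s0 t0 _ _ _ (its_theta_meas U))).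
    destruct (HU V) as [f [_ [fth fT]]].
    exact (core_false S I i1 i2 hi s0 t0 hs _ u0 _ (its_field U) (its_T U) (its_T_meas U)
      (its_theta U) (its_theta_meas U) f fth fT).
  - intros [U HU]. destruct (sts_ne U) as [u0].
    pose (HP := powset_field (sts_M U)).
    assert (Tmeas : forall i, measurable_map (@powset (sts_M U)) (@Delta_field (sts_M U) (@powset (sts_M U))) (sts_T U i)).
    { intros i B _. exact Logic.I. }
    assert (Tintro : forall i m A, @powset (sts_M U) A -> (forall m', sts_T U i m' = sts_T U i m -> A m') ->
              meas_val (sts_T U i m) A = 1).
    { intros i m A _ H. pose proof (sts_intro U i m) as E.
      pose proof (mv_mono (@powset (sts_M U)) HP (sts_T U i m) (fun m' => sts_T U i m' = sts_T U i m) A Logic.I Logic.I H) as L1.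
      rewrite E in L1.
      pose proof (mv_le1 (@powset (sts_M U)) HP (sts_T U i m) A) as L2. lra. }
    assert (thmeas : measurable_map (@powset (sts_M U)) (fun _ : S -> Prop => True) (sts_theta U)).
    { intros B _. exact Logic.I. }
    pose (TV := TW I i2 (sts_M U) u0 _ HP (sts_T U)).
    assert (introV : forall i m, meas_val (TV i m) (fun m' => TV i m' = TV i m) = 1).
    { intros i m. apply (TW_intro I i2 (sts_M U) u0 _ HP (sts_T U) Tintro i m). exact Logic.I. intros m' e; exact e. }
    pose (V := @Build_StarTS S I (W (sts_M U)) (inhabits (Wu _ u0)) TV introV (thW S s0 t0 _ (sts_theta U))).
    destruct (HU V) as [f [fth fT]].
    exact (core_false S I i1 i2 hi s0 t0 hs (sts_M U) u0 _ HP (sts_T U) Tmeas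
      (sts_theta U) thmeas f fth (fun w E i _ => fT w E i)).
Qed.
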